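(* Let $\phi:Z\to[-\infty,+\infty]$ be proper and closed, and suppose Assumptions (A1) and (A2) hold for some $\lambda\in\mathbb R$. Let $\tau\in(0,1/\lambda^-)$ and $(x',y')\in D\phi$. Then $\phi^Y_\tau(x;y')>-\infty$ for every $x\in X$, and $\phi^X_\tau(y;x')<+\infty$ for every $y\in Y$.
   Context: $(X,\mathsf d_X)$, $(Y,\mathsf d_Y)$ complete metric spaces; $Z=X\times Y$. $D_X\phi=\{x:\phi(x,y)<+\infty\ \forall y\}$, $D_Y\phi=\{y:\phi(x,y)>-\infty\ \forall x\}$, $D\phi=D_X\phi\times D_Y\phi$; proper: $D\phi\ne\emptyset$; closed: for $x\in D_X\phi$, $y\mapsto\phi(x,y)$ upper semicontinuous, for $y\in D_Y\phi$, $x\mapsto\phi(x,y)$ lower semicontinuous. (A1): $\phi=+\infty$ on $(X\setminus D_X\phi)\times D_Y\phi$, $\phi=-\infty$ on $D_X\phi\times(Y\setminus D_Y\phi)$. $\lambda^-=\max\{-\lambda,0\}$, $1/\lambda^-:=+\infty$ if $\lambda^-=0$. $\Phi_\tau(x,y;x',y')=\phi(x',y')+\frac1{2\tau}(\mathsf d_X^2(x',x)-\mathsf d_Y^2(y',y))$. $f$ on $Z$ is $\mu$-convex-concave along curves $\gamma,\sigma$ if for all $t\in[0,1]$: $f(\gamma_t,y)\le(1-t)f(\gamma_0,y)+tf(\gamma_1,y)-\frac\mu2t(1-t)\mathsf d_X^2(\gamma_0,\gamma_1)$ for all $y$, and $f(x,\sigma_t)\ge(1-t)f(x,\sigma_0)+tf(x,\sigma_1)+\frac\mu2t(1-t)\mathsf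 d_Y^2(\sigma_0,\sigma_1)$ for all $x$. (A2) for $\lambda$: for every $(x,y)\in Z$, $(x_0,y_0),(x_1,y_1)\in D\phi$ there are continuous curves $\gamma$ from $x_0$ to $x_1$, $\sigma$ from $y_0$ to $y_1$ such that for all $\tau\in(0,1/\lambda^-)$, $(x',y')\mapsto\Phi_\tau(x,y;x',y')$ is $(\tau^{-1}+\lambda)$-convex-concave along them. $\phi^X_\tau(y;x')=\sup_{y'\in Y}\{\phi(x',y')-\frac1{2\tau}\mathsf d_Y^2(y',y)\}$, $\phi^Y_\tau(x;y')=\inf_{x''\in X}\{\phi(x'',y')+\frac1{2\tau}\mathsf d_X^2(x'',x)\}$. *)

(* Defs.v *)
From HB Require Import structures.
From mathcomp Require Import all_boot all_order all_algebra.
From mathcomp Require Import all_classical all_reals all_analysis.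
Set Implicit Arguments. Unset Strict Implicit. Unset Printing Implicit Defensive.
Import Order.TTheory GRing.Theory Num.Theory.
Local Open Scope classical_set_scope.
Local Open Scope ring_scope.

Section Defs.
Variable R : realType.

Definition is_metric (T : Type) (d : T -> T -> R) : Prop :=
  [/\ (forall x y, 0 <= d x y),
      (forall x y, d x y = 0 <-> x = y),
      (forall x y, d x y = d y x) &
      (forall x y z, d x z <= d x y + d y z)].

Definition complete_metric (T : Type) (d : T -> T -> R) : Prop :=
  forall u : nat -> T,
    (forall e, 0 < e -> exists N, forall m n, (N <= m)%N -> (N <= n)%N ->
        d (u m) (u n) < e) ->
    exists l, forall e, 0 < e -> exists N, forall n, (N <= n)%N -> d (u n) l < e.

Definition lsc (T : Type) (d : T -> T -> R) (f : T -> \bar R) : Prop :=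
  forall x (a : R), (a%:E < f x)%E ->
    exists del, 0 < del /\ forall z, d z x < del -> (a%:E < f z)%E.
Definition usc (T : Type) (d : T -> T -> R) (f : T -> \bar R) : Prop :=
  forall x (a : R), (f x < a%:E)%E ->
    exists del, 0 < del /\ forall z, d z x < del -> (f z < a%:E)%E.

Definition curve_continuous (T : Type) (d : T -> T -> R) (g : R -> T) : Prop :=
  forall t, 0 <= t <= 1 -> forall e, 0 < e -> exists del, 0 < del /\
    forall s, 0 <= s <= 1 -> `|s - t| < del -> d (g s) (g t) < e.

Variables (X Y : Type) (dX : X -> X -> R) (dY : Y -> Y -> R).
Variable phi : X * Y -> \bar R.

Definition DX : set X := [set x | forall y, (phi (x, y) < +oo)%E].
Definition DY : set Y := [set y | forall x, (-oo < phi (x, y))%E].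

Definition proper_fun : Prop := exists x y, DX x /\ DY y.

Definition closed_fun : Prop :=
  (forall x, DX x -> usc dY (fun y => phi (x, y))) /\
  (forall y, DY y -> lsc dX (fun x => phi (x, y))).

Definition A1 : Prop :=
  (forall x y, ~ DX x -> DY y -> phi (x, y) = +oo%E) /\
  (forall x y, DX x -> ~ DY y -> phi (x, y) = -oo%E).

Definition negpart (l : R) : R := Num.max (- l) 0.
Definition inv_negpart (l : R) : \bar R :=
  if negpart l == 0 then +oo%E else (1 / negpart l)%:E.
Definition tau_adm (l tau : R) : Prop := 0 < tau /\ (tau%:E < inv_negpart l)%E.

Definition Phi (tau : R) (x : X) (y : Y) (x' : X) (y' : Y) : \bar R :=
  (phi (x', y') + ((dX x' x ^+ 2 - dY y' y ^+ 2) / (2 * tau))%:E)%E.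

Definition convex_concave_along (f : X * Y -> \bar R) (mu : R)
    (g : R -> X) (s : R -> Y) : Prop :=
  forall t, 0 <= t <= 1 ->
    (forall y, (f (g t, y) <= (1 - t)%:E * f (g 0%R, y) + t%:E * f (g 1%R, y)
                 - (mu / 2 * t * (1 - t) * dX (g 0%R) (g 1%R) ^+ 2)%:E)%E) /\
    (forall x, ((1 - t)%:E * f (x, s 0%R) + t%:E * f (x, s 1%R)
                 + (mu / 2 * t * (1 - t) * dY (s 0%R) (s 1%R) ^+ 2)%:E
                 <= f (x, s t))%E).

Definition A2 (l : R) : Prop :=
  forall (x : X) (y : Y) x0 y0 x1 y1,
    DX x0 -> DY y0 -> DX x1 -> DY y1 ->
    exists (g : R -> X) (s : R -> Y),
      curve_continuous dX g /\ g 0%R = x0 /\ g 1%R = x1 /\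
      curve_continuous dY s /\ s 0%R = y0 /\ s 1%R = y1 /\
          (forall tau, tau_adm l tau ->
            convex_concave_along (fun p => Phi tau x y p.1 p.2) (tau^-1 + l) g s).

Definition phiX (tau : R) (y : Y) (x' : X) : \bar R :=
  ereal_sup [set (phi (x', y') - (dY y' y ^+ 2 / (2 * tau))%:E)%E | y' in [set: Y]].
Definition phiY (tau : R) (x : X) (y' : Y) : \bar R :=
  ereal_inf [set (phi (x'', y') + (dX x'' x ^+ 2 / (2 * tau))%:E)%E | x'' in [set: X]].

End Defs.

(* Main.v *)
Require Import Defs.
From HB Require Import structures.
From mathcomp Require Import all_boot all_order all_algebra.
From mathcomp Require Import all_classical all_reals all_analysis.
From mathcomp Require Import ring lra.
Import Order.TTheory GRing.Theory Num.Theory.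
Local Open Scope classical_set_scope.
Local Open Scope ring_scope.

Lemma large_s (R : realType) (e K c : R) :
  (forall s, c <= s -> s * e <= K) -> e <= 0.
Proof.
move=> H; rewrite leNgt; apply/negP => e0.
pose s := Num.max c ((`|K| + 1) / e).
have := H s ltac:(by rewrite le_max lexx).
have : (`|K| + 1) / e <= s by rewrite le_max lexx orbT.
move=> hs hle.
have : (`|K| + 1) <= s * e.
  by rewrite -ler_pdivrMr.
have := ler_norm K. lra.
Qed.

Lemma core (R : realType) (h0 h1 D del tau lam c e : R) :
  0 < del -> 0 < tau -> 0 < tau^-1 + lam -> 0 <= D -> 0 <= c -> 0 <= e ->
  D - c <= e ->
  (D < del -> h0 - 1 < h1) ->
  (del <= D -> exists q d, 0 <= d /\ (d < del -> h0 - 1 < q) /\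
      forall s, tau^-1 <= s ->
        q + s * d ^+ 2 / 2 <= (1 - del / (2 * D)) * h0
          + del / (2 * D) * (h1 + s * D ^+ 2 / 2)
          - (s + lam) / 2 * (del / (2 * D)) * (1 - del / (2 * D)) * D ^+ 2) ->
  h0 - 1 - (2 / del + tau^-1 * c) ^+ 2 / (tau^-1 + lam) <= h1 + e ^+ 2 / (2 * tau).
Proof.
move=> del0 tau0 mu0 D0 c0 e0 eDc Hlt Hge.
set m := tau^-1. set mu := m + lam.
have m0 : 0 < m by rewrite invr_gt0.
have mup : 0 < mu by [].
have bsq : 0 <= (2 / del + m * c) ^+ 2 / mu by apply: divr_ge0 => //; [exact: sqr_ge0 | exact: ltW].
have esq : 0 <= e ^+ 2 / (2 * tau) by apply: divr_ge0; [exact: sqr_ge0| lra].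
case: (ltP D del) => [Dlt|Dge].
  have := Hlt Dlt. lra.
have Dp : 0 < D by lra.
set t := del / (2 * D).
have t0 : 0 < t by rewrite /t divr_gt0 //; lra.
have tD : t * D = del / 2.
  rewrite /t; field; lra.
have t12 : t <= 1/2.
  rewrite /t ler_pdivrMr; last lra.
  lra.
have [q [d [d0 [Hq Hs]]]] := Hge Dge.
have dle : d ^+ 2 - t ^+ 2 * D ^+ 2 <= 0.
  suff : (d ^+ 2 - t ^+ 2 * D ^+ 2) / 2 <= 0 by lra.
  apply: (@large_s R _ ((1 - t) * h0 + t * h1 - lam / 2 * t * (1 - t) * D ^+ 2 - q) m) => s hs.
  have := Hs s hs.
  have -> : (1 - t) * h0 + t * (h1 + s * D ^+ 2 / 2) - (s + lam) / 2 * t * (1 - t) * D ^+ 2 = (1 - t) * h0 + t * h1 - lam / 2 * t * (1 - t) * D ^+ 2 + s * (t ^+ 2 * D ^+ 2) / 2.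
    ring.
  have -> : s * ((d ^+ 2 - t ^+ 2 * D ^+ 2) / 2) = s * d ^+ 2 / 2 - s * (t ^+ 2 * D ^+ 2) / 2 by ring.
  lra.
have dD : d <= t * D by nra.
have qh : h0 - 1 < q by apply: Hq; lra.
have H1 := Hs m (lexx m); rewrite -/t -/mu in H1.
set W := h1 - h0 + m * D ^+ 2 / 2 - mu * (1 - t) * D ^+ 2 / 2.
have md : 0 <= m * d ^+ 2 / 2 by apply: divr_ge0 => //; apply: mulr_ge0; [lra|exact: sqr_ge0].
have tW : -1 < t * W.
  have E : (1 - t) * h0 + t * (h1 + m * D ^+ 2 / 2) - mu / 2 * t * (1 - t) * D ^+ 2 = h0 + t * W.
    rewrite /W /mu; ring.
  lra.
have dW : -2 * D < del * W.
  have dE : del = 2 * (t * D) by rewrite tD; field.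
  have -> : del * W = 2 * D * (t * W) by rewrite [in LHS]dE; ring.
  rewrite -subr_gt0.
  have -> : 2 * D * (t * W) - (-2 * D) = 2 * (D * (t * W + 1)) by ring.
  apply: mulr_gt0 => //; apply: mulr_gt0; lra.
set u := del^-1.
have u0 : 0 < u by rewrite invr_gt0.
have Wu : -2 * D * u <= W.
  have -> : W = (del * W) * u by rewrite /u; field; lra.
  have : (del * W + 2 * D) * u >= 0 by apply: mulr_ge0; lra.
  lra.
have mt : mu * D ^+ 2 / 2 <= mu * (1 - t) * D ^+ 2.
  have : 0 <= mu * D ^+ 2 by apply: mulr_ge0; [lra|exact: sqr_ge0].
  nra.
have eD : D ^+ 2 - 2 * c * D <= e ^+ 2.
  case: (lerP 0 (D - c)) => h.
    have : (D - c) ^+ 2 <= e ^+ 2 by rewrite ler_sqr ?nnegrE.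
    have -> : (D - c) ^+ 2 = D ^+ 2 - 2 * c * D + c ^+ 2 by ring.
    have := sqr_ge0 c; lra.
  have := sqr_ge0 e. nra.
have meD : m * (D ^+ 2 - 2 * c * D) <= m * e ^+ 2 by rewrite ler_pM2l.
have sq : 0 <= (mu * D / 2 - (2 / del + m * c)) ^+ 2 / mu.
  apply: divr_ge0; [exact: sqr_ge0 | lra].
have sqE : (mu * D / 2 - (2 / del + m * c)) ^+ 2 / mu
   = mu * D ^+ 2 / 4 - (2 * u + m * c) * D + (2 / del + m * c) ^+ 2 / mu.
  rewrite /u; field; lra.
have eE : e ^+ 2 / (2 * tau) = m * e ^+ 2 / 2 by rewrite /m; field; lra.
rewrite eE.
have : h0 - m * D ^+ 2 / 2 + mu * (1 - t) * D ^+ 2 / 2 - 2 * D * u <= h1 by rewrite /W in Wu; lra.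
move: sqE sq mt meD.
set B := (2 / del + m * c) ^+ 2 / mu.
set E2 := e ^+ 2. set D2 := D ^+ 2. set Z := (mu * D / 2 - (2 / del + m * c)) ^+ 2 / mu.
move=> sqE sq mt meD H.
have : m * (D2 - 2 * c * D) = m * D2 - 2 * m * c * D by ring.
have : mu * (1 - t) * D2 / 2 = (mu * (1 - t) * D2) / 2 by ring.
lra.
Qed.

Lemma fin_of (R : realType) (e : \bar R) : (-oo < e)%E -> (e < +oo)%E -> exists r, e = r%:E.
Proof. by case: e => // r; exists r. Qed.

Lemma adm_inv (R : realType) (l tau s : R) : tau_adm l tau -> tau^-1 <= s -> tau_adm l s^-1.
Proof.
move=> [t0 tl] hs.
have s0 : 0 < s by apply: lt_le_trans hs; rewrite invr_gt0.
split; first by rewrite invr_gt0.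
apply: le_lt_trans tl; rewrite lee_fin.
by rewrite -[tau]invrK lef_pV2 ?posrE ?invr_gt0.
Qed.


Theorem mainTheorem8 (R : realType) (X Y : Type)
    (dX : X -> X -> R) (dY : Y -> Y -> R) (phi : X * Y -> \bar R) (l : R) :
  is_metric dX -> complete_metric dX ->
  is_metric dY -> complete_metric dY ->
  proper_fun phi -> closed_fun dX dY phi -> A1 phi -> A2 dX dY phi l ->
  forall tau : R, tau_adm l tau ->
  forall (x' : X) (y' : Y), DX phi x' -> DY phi y' ->
    (forall x : X, (-oo < phiY dX phi tau x y')%E) /\
    (forall y : Y, (phiX dY phi tau y x' < +oo)%E).
Proof.
move=> [dX0 dXz dXs dXt] _ [dY0 dYz dYs dYt] _ _ [usc_ lsc_] [A1x A1y] HA2 tau adm x' y' Dx' Dy'.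
have [tau0 _] := adm.
have mu0 : 0 < tau^-1 + l.
  move: adm => [_]; rewrite /inv_negpart /negpart.
  case: eqP => [/eqP|hne].
    rewrite eq_le ge_max => /andP[/andP[h _] _] _.
    have : 0 < tau^-1 by rewrite invr_gt0.
    lra.
  rewrite lte_fin => h.
  set M := Num.max (- l) 0 in hne h.
  have M1 : - l <= M by rewrite le_max lexx.
  have M2 : 0 <= M by rewrite le_max lexx orbT.
  have Mp : 0 < M by rewrite lt_neqAle M2 andbT eq_sym; apply/eqP.
  rewrite ltr_pdivlMr // in h.
  have ti : tau * tau^-1 = 1 by rewrite mulfV //; lra.
  have : 0 < tau^-1 by rewrite invr_gt0.
  nra.
have [p0 Ep0] : exists p0, phi (x', y') = p0%:E by apply: fin_of; [exact: Dy'|exact: Dx'].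
have dXxx : forall z, dX z z = 0 by move=> z; apply/dXz.
have dYyy : forall z, dY z z = 0 by move=> z; apply/dYz.
split.
- move=> x.
  have [del [del0 Hdel]] := lsc_ y' Dy' x' (p0 - 1) ltac:(by rewrite /= Ep0 lte_fin; lra).
  set c := dX x' x.
  apply: (lt_le_trans (ltNyr (p0 - 1 - (2 / del + tau^-1 * c) ^+ 2 / (tau^-1 + l)))).
  apply: le_ereal_inf_tmp => _ [z _ <-].
  have [Dz|nDz] := pselect (DX phi z); last first.
    by rewrite A1x // addye ?leey.
  have [p1 Ep1] : exists p1, phi (z, y') = p1%:E by apply: fin_of; [exact: Dy'|exact: Dz].
  rewrite Ep1 -EFinD lee_fin.
  set D := dX x' z.
  apply: (@core R p0 p1 D del tau l c (dX z x)) => //.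
  + exact: dX0.
  + exact: dX0.
  + have := dXt x' x z; rewrite (dXs x z) -/D -/c; lra.
  + move=> hD; have := Hdel z; rewrite Ep1 lte_fin; apply; by rewrite dXs.
  move=> hD.
  have Dp : 0 < D by lra.
  have [g [s [_ [g0 [g1 [_ [_ [_ Hc]]]]]]]] := HA2 x' y' x' y' z y' Dx' Dy' Dz Dy'.
  set t := del / (2 * D).
  have t01 : 0 <= t <= 1.
    apply/andP; split; first by rewrite /t divr_ge0 //; lra.
    rewrite /t ler_pdivrMr; lra.
  have key : forall tau', tau_adm l tau' -> (phi (g t, y') + ((dX (g t) x' ^+ 2) / (2 * tau'))%:E <= ((1 - t) * p0 + t * (p1 + D ^+ 2 / (2 * tau')) - (tau'^-1 + l) / 2 * t * (1 - t) * D ^+ 2)%:E)%E.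
    move=> tau' adm'. have [H _] := Hc tau' adm' t t01. have := H y'.
    rewrite /Phi /= g0 g1 Ep0 Ep1 dYyy dXxx (dXs z x') -/D.
    move=> H1; apply: le_trans (le_trans _ H1) _.
      by rewrite expr0n /= subr0.
    rewrite expr0n /= !subr0 mul0r addr0 -EFinD lee_fin.
    lra.
  have [q Eq] : exists q, phi (g t, y') = q%:E.
    move: (key tau adm).
    case E: (phi (g t, y')) => [r| |] H; first by exists r.
      by move: H; rewrite addye.
    by have := Dy' (g t); rewrite E.
  exists q, (dX (g t) x').
  split; first exact: dX0.
  split.
    by move=> hd; have := Hdel (g t) hd; rewrite /= Eq lte_fin.
  move=> s0 hs.
  have s0p : 0 < s0 by apply: lt_le_trans hs; rewrite invr_gt0.
  have := key s0^-1 (@adm_inv R l tau s0 adm hs).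
  rewrite Eq -EFinD lee_fin invrK.
  have E1 : forall a, a / (2 * s0^-1) = s0 * a / 2 by move=> a; field; lra.
  by rewrite !E1.

- move=> y.
  have [del [del0 Hdel]] := usc_ x' Dx' y' (p0 + 1) ltac:(by rewrite /= Ep0 lte_fin; lra).
  set c := dY y' y.
  apply: (le_lt_trans _ (ltry (p0 + 1 + (2 / del + tau^-1 * c) ^+ 2 / (tau^-1 + l)))).
  apply: ge_ereal_sup => _ [w _ <-].
  have [Dw|nDw] := pselect (DY phi w); last first.
    by rewrite A1y // addNye leNye.
  have [p1 Ep1] : exists p1, phi (x', w) = p1%:E by apply: fin_of; [exact: Dw|exact: Dx'].
  rewrite Ep1 -EFinB lee_fin.
  set D := dY y' w.
  suff : - p0 - 1 - (2 / del + tau^-1 * c) ^+ 2 / (tau^-1 + l) <= - p1 + dY w y ^+ 2 / (2 * tau) by lra.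
  apply: (@core R (- p0) (- p1) D del tau l c (dY w y)) => //.
  + exact: dY0.
  + exact: dY0.
  + have := dYt y' y w; rewrite (dYs y w) -/D -/c; lra.
  + move=> hD; have := Hdel w; rewrite /= Ep1 lte_fin => H.
    have := H ltac:(by rewrite dYs); lra.
  move=> hD.
  have Dp : 0 < D by lra.
  have [g [s [_ [_ [_ [_ [s0 [s1 Hc]]]]]]]] := HA2 x' y' x' y' x' w Dx' Dy' Dx' Dw.
  set t := del / (2 * D).
  have t01 : 0 <= t <= 1.
    apply/andP; split; first by rewrite /t divr_ge0 //; lra.
    rewrite /t ler_pdivrMr; lra.
  have key : forall tau', tau_adm l tau' -> ((((1 - t) * p0 + t * (p1 - D ^+ 2 / (2 * tau')) + (tau'^-1 + l) / 2 * t * (1 - t) * D ^+ 2)%:E <= phi (x', s t) - (dY (s t) y' ^+ 2 / (2 * tau'))%:E)%E).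
    move=> tau' adm'. have [_ H] := Hc tau' adm' t t01. have := H x'.
    rewrite /Phi /= s0 s1 Ep0 Ep1 dYyy dXxx (dYs w y') -/D.
    move=> H1; apply: le_trans (le_trans _ H1) _.
      rewrite expr0n /= !subr0 !sub0r mul0r addr0 -EFinD lee_fin.
      lra.
    by rewrite expr0n /= sub0r mulNr EFinN.
  have [q Eq] : exists q, phi (x', s t) = q%:E.
    move: (key tau adm).
    case E: (phi (x', s t)) => [r| |] H; first by exists r.
      by have := Dx' (s t); rewrite E.
    by move: H; rewrite addNye.
  exists (- q), (dY (s t) y').
  split; first exact: dY0.
  split.
    move=> hd; have := Hdel (s t); rewrite /= Eq lte_fin => H.
    have := H hd; lra.
  move=> s2 hs.
  have s2p : 0 < s2 by apply: lt_le_trans hs; rewrite invr_gt0.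
  have := key s2^-1 (@adm_inv R l tau s2 adm hs).
  rewrite Eq -EFinB lee_fin invrK.
  have E1 : forall a, a / (2 * s2^-1) = s2 * a / 2 by move=> a; field; lra.
  rewrite !E1.
  lra.
Qed.
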